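(* Let $I$ be an irreducible numerical semigroup and $K\in\mathbb{N}$ such that $\mathrm{F}(I)+K$ is odd and $\mathrm{F}(I)\ge K+1$. Then $[\theta(I),I]$ contains at least one numerical semigroup $S$ with $\mathrm{l}(S)=K$ if and only if $\#(I\setminus\theta(I))\ge\lfloor K/2\rfloor$.
   Context: A numerical semigroup is a subset $S\subseteq\mathbb{N}$ closed under addition with $0\in S$ and $\mathbb{N}\setminus S$ finite; $\mathrm{F}(S)=\max(\mathbb{Z}\setminus S)$; $\langle X\rangle$ is the submonoid generated by $X$. Irreducible: not the intersection of two numerical semigroups properly containing it. $\mathrm{N}(S)=\{s\in S\mid s<\mathrm{F}(S)\}$, $\mathrm{L}(S)=\{x\in\mathbb{N}\setminus S\mid \mathrm{F}(S)-x\notin \mathrm{N}(S)\}$, $\mathrm{l}(S)=\#\mathrm{L}(S)$. $\Delta(S)=\{s\in S\mid s<\frac{\mathrm{F}(S)}{2}\}$, $\theta(S)=\langle\Delta(S)\rangle\cup\{\mathrm{F}(S)+1,\mathrm{F}(S)+2,\ldots\}$. $[A,B]$ is the set of numerical semigroups $X$ with $A\subseteq X\subseteq B$. *)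

(* Defs.v *)
From HB Require Import structures.
From mathcomp Require Import all_boot all_order all_algebra.
From Stdlib Require Import ClassicalEpsilon.
Set Implicit Arguments. Unset Strict Implicit. Unset Printing Implicit Defensive.
Import Order.TTheory GRing.Theory Num.Theory.

Definition numsg (S : pred nat) : Prop :=
  [/\ S 0,
      (forall x y, S x -> S y -> S (x + y)) &
      (exists N, forall n, N <= n -> S n)].

Definition subsetP_ (X Y : pred nat) : Prop := forall x, X x -> Y x.

Definition proper_ (X Y : pred nat) : Prop := subsetP_ X Y /\ exists y, Y y /\ ~~ X y.

Definition irreducible_ns (S : pred nat) : Prop :=
  numsg S /\
  ~ (exists S1 S2 : pred nat, numsg S1 /\ numsg S2 /\ proper_ S S1 /\ proper_ S S2 /\
        (forall x, S x = (S1 x && S2 x))).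

(* f = max (Z \ S) *)
Definition is_frob (S : pred nat) (f : int) : Prop :=
  (forall n : nat, (f < Posz n)%R -> S n) /\ (forall n : nat, Posz n = f -> ~~ S n)
  /\ (-1 <= f)%R.

(* Frobenius number F(S) (meaningful for numerical semigroups) *)
Definition frob (S : pred nat) : int := epsilon (inhabits 0%R) (is_frob S).

Definition inN (S : pred nat) (s : nat) : bool := S s && (Posz s < frob S)%R.

(* x in L(S): x in N \ S and F(S) - x not in N(S) (here x <= F(S), so F(S) - x is a nat) *)
Definition inL (S : pred nat) (x : nat) : bool :=
  ~~ S x && ~~ inN S (absz (frob S - Posz x)).

(* l(S) = #L(S); L(S) \subseteq [0, F(S)] since N \ S \subseteq [0, F(S)] *)
Definition lS (S : pred nat) : nat :=
  if (frob S < 0)%R then 0 else count (inL S) (iota 0 (absz (frob S)).+1).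

Definition Delta (S : pred nat) (s : nat) : bool := S s && (Posz (2 * s) < frob S)%R.

Definition generated (X : pred nat) (n : nat) : Prop :=
  exists s : seq nat, all X s /\ sumn s = n.

Definition theta (S : pred nat) (n : nat) : Prop :=
  generated (Delta S) n \/ (frob S < Posz n)%R.

(* Main.v *)
Require Import Defs.
From HB Require Import structures.
From mathcomp Require Import all_boot all_order all_algebra.
From mathcomp Require Import zify.
From Stdlib Require Import ClassicalEpsilon Classical.
Import Order.TTheory GRing.Theory Num.Theory.
Set Implicit Arguments. Unset Strict Implicit. Unset Printing Implicit Defensive.

Lemma test (n m : nat) : n.*2 = m -> odd m = false -> m./2 = n.
Proof. lia. Qed.

Lemma is_frob_uniq (S : pred nat) a b : is_frob S a -> is_frob S b -> a = b.
Proof.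
move=> [A1 [A2 A3]] [B1 [B2 B3]].
have key : forall a b, is_frob S a -> is_frob S b -> (a <= b)%R.
  move=> {A1 A2 A3 B1 B2 B3} a' b' [A1 [A2 A3]] [B1 [B2 B3]].
  rewrite leNgt; apply/negP => ltba.
  have : (0 <= a')%R by lia.
  case: a' A1 A2 A3 ltba => [n|n] // A1 A2 A3 ltba _.
  by move: (A2 n erefl); rewrite (B1 n ltba).
apply/eqP; rewrite eq_le; apply/andP; split; apply: key; split=> //; split=> //.
Qed.

Lemma frob_spec_ex (S : pred nat) f : is_frob S f -> is_frob S (frob S).
Proof. move=> H; exact: (epsilon_spec (inhabits 0%R) (is_frob S) (ex_intro _ f H)). Qed.

Lemma frob_eq (S : pred nat) f : is_frob S f -> frob S = f.
Proof. move=> H; exact: (is_frob_uniq (frob_spec_ex H) H). Qed.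

Lemma numsg_frob (S : pred nat) : numsg S -> exists f, is_frob S f.
Proof.
case=> S0 Sadd [N HN].
case: (classic (exists n, ~~ S n)) => [ex|nex].
  have ub : forall i, ~~ S i -> i <= N.
    move=> i Si; rewrite leqNgt; apply/negP => /ltnW /HN; by rewrite (negbTE Si).
  case: (ex_maxnP ex ub) => m Sm mmax.
  exists (Posz m); split; [|split].
  - move=> n; rewrite ltz_nat => mn; apply/negPn/negP => /mmax; lia.
  - by move=> n [->].
  - by [].
exists (-1)%R; split; [|split].
- move=> n _; apply/negPn/negP => Sn; apply: nex; by exists n.
- by [].
- by [].
Qed.

Lemma frob_nat (I : pred nat) f : numsg I -> frob I = Posz f ->
  (forall n, f < n -> I n) /\ ~~ I f.
Proof.
move=> nI hf; case: (numsg_frob nI) => g /frob_spec_ex; rewrite hf => -[H1 [H2 _]].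
split; first by move=> n fn; apply: H1; rewrite ltz_nat.
exact: H2.
Qed.

Lemma irr_sym (I : pred nat) f : irreducible_ns I -> frob I = Posz f ->
  forall x, x <= f -> ~~ I x -> ~~ I (f - x) -> x.*2 = f.
Proof.
move=> [nI nred] hf; have [Igt If] := frob_nat nI hf.
have [I0 Iadd [N HN]] := nI.
move=> x xf Ix Ifx; apply/eqP/negPn/negP => x2.
pose P := fun y => [&& y <= f, ~~ I y, ~~ I (f - y) & y.*2 != f].
have exP : exists y, P y by exists x; rewrite /P xf Ix Ifx x2.
have ubP : forall y, P y -> y <= f by move=> y /and4P[].
case: (ex_maxnP exP ubP) => h /and4P[hf' Ih Ifh h2] hmax.
have Pfh : P (f - h).
  rewrite /P leq_subr Ifh subKn // Ih /=; apply/negP => /eqP E.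
  move/negP: h2; apply; apply/eqP; lia.
have hgt : f < h.*2 by move: (hmax _ Pfh) h2 => + /eqP; lia.
have hnf : h != f by apply/negP => /eqP E; move: Ifh; rewrite E subnn I0.
apply: nred; exists (fun n => I n || (n == h)), (fun n => I n || (n == f)).
split; [|split; [|split; [|split]]].
- split; first by rewrite I0.
  + move=> a b /orP[Ia|/eqP->] /orP[Ib|/eqP->]; first by rewrite Iadd.
    * rewrite (addnC a h).
      case: (posnP a) => [->|a0]; first by rewrite addn0 eqxx orbT.
      apply/orP; left; apply/negPn/negP => Iab.
      case: (ltngtP f (h + a)) => c.
      -- by move: Iab; rewrite Igt.
      -- have Ifab : ~~ I (f - (h + a)).
           apply/negP => H; move/negP: Ifh; apply.
           have -> : f - h = (f - (h + a)) + a by lia.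
           exact: Iadd.
         have : P (h + a) by rewrite /P Iab Ifab /=; apply/andP; split; lia.
         move/hmax; lia.
      -- by move: Ifh; rewrite c addKn Ia.
    * case: (posnP b) => [->|b0]; first by rewrite addn0 eqxx orbT.
      apply/orP; left; apply/negPn/negP => Iab.
      case: (ltngtP f (h + b)) => c.
      -- by move: Iab; rewrite Igt.
      -- have Ifab : ~~ I (f - (h + b)).
           apply/negP => H; move/negP: Ifh; apply.
           have -> : f - h = (f - (h + b)) + b by lia.
           exact: Iadd.
         have : P (h + b) by rewrite /P Iab Ifab /=; apply/andP; split; lia.
         move/hmax; lia.
      -- by move: Ifh; rewrite c addKn Ib.
    * by rewrite Igt //; lia.
  + by exists N => n /HN ->.
- split; first by rewrite I0.
  + move=> a b /orP[Ia|/eqP->] /orP[Ib|/eqP->]; first by rewrite Iadd.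
    * case: (posnP a) => [->|a0]; first by rewrite add0n eqxx orbT.
      by rewrite Igt //; lia.
    * case: (posnP b) => [->|b0]; first by rewrite addn0 eqxx orbT.
      by rewrite Igt //; lia.
    * rewrite Igt //; lia.
  + by exists N => n /HN ->.
- split; first by move=> y ->.
  by exists h; rewrite eqxx orbT.
- split; first by move=> y ->.
  by exists f; rewrite eqxx orbT.
- move=> y; case: (I y) => //=.
  apply/esym/negP => /andP[/eqP -> /eqP E]; move/negP: hnf; apply; by apply/eqP.
Qed.


Lemma count_refl (a : pred nat) n :
  count (fun x => a (n - x)) (iota 0 n.+1) = count a (iota 0 n.+1).
Proof.
elim: n => [//|n IH].
have E1 : iota 0 n.+2 = iota 0 n.+1 ++ [:: n.+1] by rewrite -addn1 iotaD.
have E2 : iota 0 n.+2 = 0 :: [seq i.+1 | i <- iota 0 n.+1].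
  by rewrite /= -(iotaDl 1).
have CC : forall (p : pred nat) x s, count p (x :: s) = p x + count p s by [].
rewrite {1}E2 E1 count_cat CC subn0 count_map.
rewrite (eq_count (a2 := fun x => a (n - x))) // IH /=; lia.
Qed.

Lemma count_half f : count (fun x => x.*2 == f) (iota 0 f.+1) = ~~ odd f.
Proof.
case: (boolP (odd f)) => oddf.
  apply/eqP; rewrite -leqn0 leqNgt -has_count; apply/hasP => -[x _ /eqP E].
  by move: oddf; rewrite -E odd_double.
rewrite (eq_count (a2 := pred1 f./2)); last first.
  move=> x /=; apply/eqP/eqP; lia.
rewrite count_uniq_mem ?iota_uniq // mem_iota; lia.
Qed.

Lemma count3 (a b c d : pred nat) s :
  (forall x, x \in s -> (d x : nat) = a x + b x + c x) ->
  count d s = count a s + count b s + count c s.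
Proof.
elim: s => [//|y s IH] H /=.
rewrite H ?mem_head // IH; first lia.
by move=> x xs; apply: H; rewrite in_cons xs orbT.
Qed.

Lemma lS_formula (I S : pred nat) f : irreducible_ns I -> frob I = Posz f -> 0 < f ->
  (forall x, f < x -> S x) -> (forall x, S x -> I x) -> S 0 ->
  lS S = (count (fun x => I x && ~~ S x) (iota 0 f.+1)).*2 + ~~ odd f.
Proof.
move=> irr hf f0 Sgt SI S0.
have [Igt If] := frob_nat irr.1 hf.
have [I0 Iadd _] := irr.1.
have hS : frob S = Posz f.
  apply: frob_eq; split; [|split] => //.
  move=> n [->]; apply/negP => /SI; by rewrite (negbTE If).
rewrite /lS hS ltz_nat ltn0; change (count (inL S) (iota 0 f.+1) = (count (fun x : nat => I x && ~~ S x) (iota 0 f.+1)).*2 + ~~ odd f).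
rewrite (@count3 (fun x => I x && ~~ S x) (fun x => I (f - x) && ~~ S (f - x))
   (fun x => x.*2 == f)); last first.
  move=> x; rewrite mem_iota => /andP[_]; rewrite ltnS => xf.
  rewrite /inL hS.
  have -> : absz (Posz f - Posz x)%R = f - x by rewrite subzn.
  rewrite /inN hS ltz_nat.
  have Ifx : I x -> I (f - x) -> False.
    by move=> A B; move: (Iadd _ _ A B); rewrite subnKC // (negbTE If).
  have S1 : S x -> I x by apply: SI.
  have S2 : S (f - x) -> I (f - x) by apply: SI.
  have Irr := irr_sym irr hf xf.
  case: (posnP x) => [->|x0].
    by rewrite S0 subn0 /= (negbTE If) andbF /=; case: f f0 {xf Irr Ifx S2 Igt If hS Sgt hf}.
  have -> : f - x < f by lia.
  rewrite andbT.
  case: (boolP (x.*2 == f)) => [/eqP x2|x2].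
    have -> : f - x = x by lia.
    have nIx : ~~ I x by apply/negP => Ix; move: (Iadd _ _ Ix Ix); rewrite addnn x2 (negbTE If).
    have nSx : ~~ S x by apply/negP => /S1; apply/negP.
    by rewrite (negbTE nIx) nSx /=.
  have Irr' : ~~ I x -> ~~ I (f - x) -> False by move=> A B; move: (Irr A B) x2 => ->; rewrite eqxx.
  rewrite addn0.
  move: Ifx S1 S2 Irr'; case: (I x); case: (I (f - x)); case: (S x); case: (S (f - x));
    move=> Ifx S1 S2 Irr' //=; try (by exfalso; apply: Ifx);
    try (by move: (S1 isT)); try (by move: (S2 isT)); try (by exfalso; apply: Irr').

rewrite (count_refl (fun y => I y && ~~ S y)) count_half; lia.
Qed.

Lemma count_thr (G : pred nat) m n :
  count (fun x => G x && (count G (iota 0 x) < m)) (iota 0 n) = minn (count G (iota 0 n)) m.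
Proof.
elim: n => [|n IH]; first by rewrite /= min0n.
have E : iota 0 n.+1 = iota 0 n ++ [:: n] by rewrite -addn1 iotaD.
rewrite E !count_cat IH /=; case: (G n) => /=; lia.
Qed.

Lemma count_mono (G : pred nat) x y : x <= y -> count G (iota 0 x) <= count G (iota 0 y).
Proof. by move=> xy; rewrite -(subnKC xy) iotaD count_cat leq_addr. Qed.

Lemma sum_all (P : pred nat) (I : pred nat) s :
  (forall x, P x -> I x) -> I 0 -> (forall x y, I x -> I y -> I (x + y)) ->
  all P s -> I (sumn s).
Proof.
move=> PI I0 Iadd; elim: s => //= a s IH /andP[Pa As].
by apply: Iadd; [apply: PI | apply: IH].
Qed.

Theorem proposition39 (I : pred nat) (K : nat) :
  irreducible_ns I ->
  odd (absz (frob I + Posz K)%R) ->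
  (Posz K + 1 <= frob I)%R ->
  (exists S : pred nat,
      numsg S /\ (forall x, theta I x -> S x) /\ (forall x, S x -> I x) /\ lS S = K)
  <->
  (exists s : seq nat,
      uniq s /\ (forall x, x \in s -> I x /\ ~ theta I x) /\ K./2 <= size s).
Proof.
move=> irr hodd hK.
have nI := irr.1; have [I0 Iadd [N HN]] := nI.
case E: (frob I) => [f|f]; last by move: hK; rewrite E NegzE; lia.
have f0 : 0 < f by move: hK; rewrite E; lia.
have oK : odd (f + K) by move: hodd; rewrite E -PoszD.
have [Igt If] := frob_nat nI E.
have thI : forall x, theta I x -> I x.
  move=> x [[s [As <-]]|].
    by apply: (sum_all (P := Delta I)) => // y /andP[].
  by rewrite E ltz_nat => /Igt.
have thgt : forall x, f < x -> theta I x by move=> x fx; right; rewrite E ltz_nat.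
have th0 : theta I 0 by left; exists [::].
have thadd : forall a b, theta I a -> theta I b -> theta I (a + b).
  move=> a b; rewrite /theta E !ltz_nat => -[[s1 [A1 S1]]|g1] [[s2 [A2 S2]]|g2];
    try (by right; lia).
  by left; exists (s1 ++ s2); rewrite all_cat A1 A2 sumn_cat S1 S2.
have par : forall c, c.*2 + ~~ odd f = K <-> c = K./2.
  move=> c; move: oK; rewrite oddD; case: (odd f) => /= oK; split; lia.
split.
- move=> [S [[S0 Sadd _] [thS [SI lSK]]]].
  have Sgt : forall x, f < x -> S x by move=> x fx; apply/thS/thgt.
  rewrite (lS_formula irr E f0 Sgt SI S0) in lSK.
  move/par: lSK => cK.
  exists (filter (fun x => I x && ~~ S x) (iota 0 f.+1)); split; [|split].
  + by rewrite filter_uniq ?iota_uniq.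
  + move=> x; rewrite mem_filter => /andP[/andP[Ix nSx] _]; split => // th.
    by move: (thS _ th); rewrite (negbTE nSx).
  + by rewrite size_filter cK.
- move=> [s [us [sP ss]]].
  pose thb x := if excluded_middle_informative (theta I x) then true else false.
  have thbP : forall x, thb x = true <-> theta I x.
    by move=> x; rewrite /thb; case: excluded_middle_informative.
  pose G x := I x && ~~ thb x.
  pose m := K./2.
  pose B x := G x && (count G (iota 0 x) < m).
  pose S x := I x && ~~ B x.
  have cG : m <= count G (iota 0 f.+1).
    rewrite -size_filter; apply: leq_trans ss _; apply: uniq_leq_size => // x xs.
    have [Ix nth] := sP x xs.
    rewrite mem_filter mem_iota /G Ix /=; apply/andP; split.
      by apply/negP => /thbP.
    rewrite ltnS leqNgt; apply/negP => /thgt //.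
  have thbt : forall x, theta I x -> B x = false.
    by move=> x /thbP th; rewrite /B /G th andbF.
  have BI : forall x, B x -> I x by move=> x /andP[/andP[]].
  have thS : forall x, theta I x -> S x by move=> x th; rewrite /S (thI _ th) thbt.
  have S0 : S 0 by apply: thS.
  have key : forall a b, S a -> S b -> ~~ thb b -> ~~ B (a + b).
    move=> a b /andP[Ia nBa] /andP[Ib nBb] nthb.
    case: (posnP a) => [->|a0]; first by rewrite add0n.
    have Gb : G b by rewrite /G Ib.
    move: nBb; rewrite /B Gb /= -leqNgt => mb.
    rewrite negb_and -leqNgt; apply/orP; right.
    apply: leq_trans mb _; apply: count_mono; lia.
  exists S; split; [|split; [|split]].
  + split => //.
    * move=> x y Sx Sy; rewrite /S Iadd; last 2 first.
        by case/andP: Sx. by case/andP: Sy.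
      case: (boolP (thb x)) => tx; case: (boolP (thb y)) => ty /=.
      -- by rewrite thbt //; apply: thadd; apply/thbP.
      -- exact: key.
      -- by rewrite addnC; apply: key.
      -- exact: key.
    * by exists f.+1 => n fn; apply: thS; apply: thgt.
  + exact: thS.
  + by move=> x /andP[].
  + have Sgt : forall x, f < x -> S x by move=> x fx; apply/thS/thgt.
    have SI : forall x, S x -> I x by move=> x /andP[].
    rewrite (lS_formula irr E f0 Sgt SI S0); apply/par.
    rewrite (eq_count (a2 := B)); last first.
      move=> x /=; rewrite /S; case: (boolP (B x)) => Bx; first by rewrite (BI _ Bx).
      by case: (I x).
    rewrite count_thr; lia.
Qed.
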